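(* Let $(\mathcal{O},g,f)$ be an oriented matroid program and let $\mathcal{O}'=\mathcal{O}\cup p$ be a nontrivial single-element extension of $\mathcal{O}$. Let $X,Y$ be old, conformal, comodular cocircuits of $\mathcal{O}'$ with $X_g=Y_g=+$. Then $X\setminus p$ and $Y\setminus p$ are conformal cocircuits of $\mathcal{O}$ with $(X\setminus p)_g=(Y\setminus p)_g=+$. Moreover, $X\setminus p$ and $Y\setminus p$ are comodular in $\mathcal{O}$ if $(X\circ Y)_p\neq 0$ or if $\mathcal{O}\cup p$ is a principal extension.
   Context: Oriented matroid $\mathcal{O}$ of rank $r$ on finite $E$, given by its cocircuits (sign vectors in $\{+,-,0\}^E$), underlying matroid $\mathcal{M}(\mathcal{O})$. Notation: $z(X)$ zero set, $\operatorname{sep}(X,Y)=\{e:X_e=-Y_e\ne0\}$, $(X\circ Y)_e=X_e$ if $X_e\ne0$, else $Y_e$; conformal means $\operatorname{sep}=\emptyset$. An edge is a covector whose zero set is a flat of rank $r-2$; cocircuits $X\ne\pm Y$ are comodular if $X\circ Y$ is an edge. An oriented matroid program $(\mathcal{O},g,f)$: $g\neq f\in E$, $g$ not a loop, $f$ not a coloop. A single-element extension $\mathcal{O}'=\mathcal{O}\cup p$ is determined by a localization $\sigma$ from cocircuits of $\mathcal{O}$ to $\{+,-,0\}$; its cocircuits are the old cocircuits $(Y,\sigma(Y))$, $Y$ a cocircuit of $\mathcal{O}$, and the new cocircuits $(Y^1\circ Y^2,0)$ with $Y^1,Y^2$ conformal comodular cocircuits of $\mathcal{O}$ with $\sigma(Y^1)=-\sigma(Y^2)\ne0$.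 $X\setminus p$ denotes restriction to $E$. The extension is nontrivial if $p$ is not a coloop. It is principal if there is a flat $A$ of $\mathcal{M}(\mathcal{O})$ such that for every flat $F$ of $\mathcal{M}(\mathcal{O})$, $p\in\operatorname{cl}_{\mathcal{M}(\mathcal{O}')}(F)$ iff $A\subseteq F$. *)

(* Defs.v *)
From mathcomp Require Import all_boot.
Set Implicit Arguments. Unset Strict Implicit. Unset Printing Implicit Defensive.

(* Signs: None = 0, Some true = +, Some false = - *)
Notation sgn := (option bool).
Definition sv (E : finType) := {ffun E -> sgn}.

Section SV.
Variable E : finType.
Implicit Types (X Y Z : sv E) (A F I : {set E}).

Definition sv0 : sv E := [ffun=> None].
Definition svopp X : sv E := [ffun e => omap negb (X e)].
Definition svcomp X Y : sv E := [ffun e => if X e is Some _ then X e else Y e].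
Definition zeroset X : {set E} := [set e | X e == None].
Definition supp X : {set E} := [set e | X e != None].
Definition pos X : {set E} := [set e | X e == Some true].
Definition negs X : {set E} := [set e | X e == Some false].
Definition sep X Y : {set E} :=
  [set e | (X e != None) && (X e == omap negb (Y e))].
Definition conformal X Y := sep X Y = set0.

Definition is_OM (C : {set sv E}) : Prop :=
  [/\ sv0 \notin C,
      (forall X, X \in C -> svopp X \in C),
      (forall X Y, X \in C -> Y \in C -> supp X \subset supp Y ->
          X = Y \/ X = svopp Y) &
      (forall X Y e, X \in C -> Y \in C -> X <> svopp Y -> e \in sep X Y ->
          exists2 Z, Z \in C &
            [/\ Z e = None, pos Z \subset pos X :|: pos Y &
                negs Z \subset negs X :|: negs Y])].

Definition covector (C : {set sv E}) V :=
  exists2 s : seq (sv E), all (mem C) s & V = foldr svcomp sv0 s.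

(* underlying matroid M(O): hyperplanes are zero sets of cocircuits;
   closure = intersection of all hyperplanes containing A (E if none) *)
Definition cl (C : {set sv E}) A : {set E} :=
  [set e | [forall X in C, (A \subset zeroset X) ==> (e \in zeroset X)]].
Definition flat (C : {set sv E}) F := cl C F = F.
Definition indep (C : {set sv E}) I := [forall e in I, e \notin cl C (I :\ e)].
Definition rank (C : {set sv E}) A : nat :=
  \max_(I : {set E} | (I \subset A) && indep C I) #|I|.
Definition OMrank (C : {set sv E}) := rank C setT.

Definition edge (C : {set sv E}) V :=
  [/\ covector C V, flat C (zeroset V) & rank C (zeroset V) + 2 = OMrank C].
Definition comodular (C : {set sv E}) X Y :=
  [/\ X \in C, Y \in C, X <> Y, X <> svopp Y & edge C (svcomp X Y)].

Definition loop (C : {set sv E}) e := forall X, X \in C -> X e = None.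
Definition coloop (C : {set sv E}) e := exists2 X, X \in C & supp X = [set e].

Definition program (C : {set sv E}) (g f : E) :=
  [/\ is_OM C, g <> f, ~ loop C g & ~ coloop C f].
End SV.

Section Ext.
Variable E : finType.
(* the new element p is None : option E; old elements are Some e *)
Definition res (X : sv (option E)) : sv E := [ffun e => X (Some e)].

Definition deletion (C' : {set sv (option E)}) : {set sv E} :=
  [set Z | [&& Z != sv0 E, [exists X in C', res X == Z] &
     [forall X in C', (res X != sv0 E) ==> (supp (res X) \subset supp Z) ==>
                       (supp Z \subset supp (res X))]]].

Definition single_ext (C : {set sv E}) (C' : {set sv (option E)}) :=
  is_OM C' /\ deletion C' = C.
Definition nontrivial_ext (C' : {set sv (option E)}) := ~ coloop C' None.
Definition old_cocircuit (C : {set sv E}) (C' : {set sv (option E)}) X :=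
  X \in C' /\ res X \in C.
Definition principal_ext (C : {set sv E}) (C' : {set sv (option E)}) :=
  exists2 A : {set E}, flat C A &
    forall F : {set E}, flat C F -> (None \in cl C' (Some @: F) <-> A \subset F).
End Ext.

(* Main.v *)
Require Import Defs.
From mathcomp Require Import all_boot.
Set Implicit Arguments. Unset Strict Implicit. Unset Printing Implicit Defensive.

Section Gen.
Variable T : finType.
Implicit Types (C : {set sv T}) (X Y Z : sv T) (A B S I J : {set T}).

Lemma supp_opp X : supp (svopp X) = supp X.
Proof. by apply/setP => e; rewrite !inE ffunE; case: (X e). Qed.

Lemma zsE X e : (e \in zeroset X) = (e \notin supp X).
Proof. by rewrite !inE negbK. Qed.

Lemma supp_incomp C X Y : is_OM C -> X \in C -> Y \in C ->
  supp X \subset supp Y -> supp X = supp Y.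
Proof. by case=> _ _ H2 _ hX hY hs; case: (H2 _ _ hX hY hs) => ->; rewrite ?supp_opp. Qed.

Lemma supp_pn X1 Y Z : pos Z \subset pos X1 :|: pos Y ->
  negs Z \subset negs X1 :|: negs Y -> supp Z \subset supp X1 :|: supp Y.
Proof.
move=> hp hn; apply/subsetP => e; rewrite inE.
case hz: (Z e) => [b|] // _; case: b hz => hz.
- have : e \in pos Z by rewrite inE hz.
  by move/(subsetP hp); rewrite !inE => /orP[/eqP->|/eqP->]; rewrite ?orbT.
- have : e \in negs Z by rewrite inE hz.
  by move/(subsetP hn); rewrite !inE => /orP[/eqP->|/eqP->]; rewrite ?orbT.
Qed.

Lemma weak_elim C X1 X2 f : is_OM C -> X1 \in C -> X2 \in C -> supp X1 != supp X2 ->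
  f \in supp X1 -> f \in supp X2 ->
  exists2 X3, X3 \in C & (f \notin supp X3) && (supp X3 \subset supp X1 :|: supp X2).
Proof.
move=> hOM h1 h2 hne hf1 hf2; have [_ hopp _ H3] := hOM.
have key : forall Y, Y \in C -> supp Y = supp X2 -> f \in sep X1 Y ->
  exists2 X3, X3 \in C & (f \notin supp X3) && (supp X3 \subset supp X1 :|: supp X2).
  move=> Y hY hsY hs.
  have hn : X1 <> svopp Y by move=> heq; move: hne; rewrite heq supp_opp hsY eqxx.
  have [Z hZ [hZf hp hn']] := H3 _ _ _ h1 hY hn hs.
  exists Z => //; rewrite inE hZf eqxx /= -hsY; exact: supp_pn hp hn'.
move: hf1 hf2; rewrite !inE.
case hx1: (X1 f) => [b1|] // _; case hx2: (X2 f) => [b2|] // _.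
case: (boolP (b1 == ~~ b2)) => hb.
- by apply: (key X2) => //; rewrite inE hx1 hx2 /=.
- apply: (key (svopp X2)); rewrite ?hopp ?supp_opp //.
  rewrite inE !ffunE hx1 hx2 /=; clear hx1 hx2; move: hb; by case: b1; case: b2.
Qed.

Lemma strong_elim C : is_OM C -> forall X1 X2 f e, X1 \in C -> X2 \in C ->
  f \in supp X1 -> f \in supp X2 -> e \in supp X1 -> e \notin supp X2 ->
  exists2 X3, X3 \in C &
    [/\ f \notin supp X3, e \in supp X3 & supp X3 \subset supp X1 :|: supp X2].
Proof.
move=> hOM.
suff H : forall n X1 X2 f e, #|supp X1 :|: supp X2| <= n -> X1 \in C -> X2 \in C ->
  f \in supp X1 -> f \in supp X2 -> e \in supp X1 -> e \notin supp X2 ->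
  exists2 X3, X3 \in C &
    [/\ f \notin supp X3, e \in supp X3 & supp X3 \subset supp X1 :|: supp X2].
  by move=> X1 X2 f e; apply: (H _ X1 X2 f e (leqnn _)).
elim=> [|n IH] X1 X2 f e hn h1 h2 hf1 hf2 he1 he2.
  have : f \in supp X1 :|: supp X2 by rewrite inE hf1.
  by move: hn; rewrite leqn0 cards_eq0 => /eqP->; rewrite inE.
have hne : supp X1 != supp X2 by apply/eqP => heq; move: he2; rewrite -heq he1.
have [X3 h3 /andP[hf3 hs3]] := weak_elim hOM h1 h2 hne hf1 hf2.
case he3: (e \in supp X3); first by exists X3.
have : ~~ (supp X3 \subset supp X1).
  by apply/negP => hsub; move: hf3; rewrite (supp_incomp hOM h3 h1 hsub) hf1.
case/subsetPn => g hg3 hg1.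
have hg2 : g \in supp X2 by move/subsetP/(_ g hg3): hs3; rewrite inE (negbTE hg1).
have hc1 : #|supp X2 :|: supp X3| <= n.
  have : supp X2 :|: supp X3 \proper supp X1 :|: supp X2.
    apply/properP; split.
      apply/subsetP => x; rewrite inE => /orP[hx|hx]; first by rewrite inE hx orbT.
      exact: (subsetP hs3).
    exists e; first by rewrite in_setU he1.
    by rewrite in_setU negb_or he2 he3.
  by move/proper_card => hlt; rewrite -ltnS (leq_trans hlt hn).
have [X4 h4 [hg4 hf4 hs4]] := IH X2 X3 g f hc1 h2 h3 hg2 hg3 hf2 hf3.
have he4 : e \notin supp X4.
  by apply/negP => /(subsetP hs4); rewrite inE (negbTE he2) he3.
have hs41 : supp X1 :|: supp X4 \subset supp X1 :|: supp X2.
  apply/subsetP => x; rewrite inE => /orP[hx|hx]; first by rewrite inE hx.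
  move/(subsetP hs4): hx; rewrite inE => /orP[hx|hx]; first by rewrite inE hx orbT.
  exact: (subsetP hs3).
have hc2 : #|supp X1 :|: supp X4| <= n.
  have : supp X1 :|: supp X4 \proper supp X1 :|: supp X2.
    apply/properP; split => //.
    exists g; first by rewrite in_setU hg2 orbT.
    by rewrite in_setU negb_or hg4 hg1.
  by move/proper_card => hlt; rewrite -ltnS (leq_trans hlt hn).
have [X5 h5 [hf5 he5 hs5]] := IH X1 X4 f e hc2 h1 h4 hf1 hf4 he1 he4.
by exists X5 => //; split => //; apply: subset_trans hs5 hs41.
Qed.


Lemma clP C A e : reflect (forall X, X \in C -> A \subset zeroset X -> e \in zeroset X)
  (e \in cl C A).
Proof.
rewrite inE; apply: (iffP forallP) => H X.
- by move=> hX hA; move: (H X); rewrite hX hA.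
- by apply/implyP => hX; apply/implyP; exact: H.
Qed.

Lemma cl_ext C A : A \subset cl C A.
Proof. by apply/subsetP => e he; apply/clP => X _ /subsetP; apply. Qed.

Lemma cl_sub C A B : A \subset cl C B -> cl C A \subset cl C B.
Proof.
move=> hAB; apply/subsetP => e /clP he; apply/clP => X hX hB; apply: he => //.
apply/subsetP => x /(subsetP hAB) /clP; apply; done.
Qed.

Lemma cl_mono C A B : A \subset B -> cl C A \subset cl C B.
Proof. by move=> h; apply: cl_sub; apply: subset_trans h (cl_ext _ _). Qed.

Lemma exchange C S a j : is_OM C -> j \in cl C (a |: S) -> j \notin cl C S ->
  a \in cl C (j |: S).
Proof.
move=> hOM hj hjS; apply/clP => X1 h1 hS1.
apply/negPn/negP; rewrite zsE negbK => ha1.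
move: hjS; rewrite inE => /forallPn [X2]; rewrite !negb_imply => /andP[h2 /andP[hS2 hj2]].
have hj1 : j \notin supp X1 by rewrite -zsE; apply: (subsetP hS1); rewrite in_setU1 eqxx.
case ha2: (a \in zeroset X2).
  have : j \in zeroset X2.
    move/clP: hj; apply => //.
    by apply/subsetP => x; rewrite in_setU1 => /orP[/eqP->|/(subsetP hS2)].
  by rewrite (negbTE hj2).
move: ha2; rewrite zsE => /negbFE ha2; move: hj2; rewrite zsE negbK => hj2.
have [X3 h3 [ha3 hj3 hs3]] := strong_elim hOM h2 h1 ha2 ha1 hj2 hj1.
have : j \in zeroset X3; last by rewrite zsE hj3.
move/clP: hj; apply => //.
apply/subsetP => x; rewrite in_setU1 => /orP[/eqP->|hx]; first by rewrite zsE.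
rewrite zsE; apply/negP => /(subsetP hs3); rewrite in_setU.
move: (subsetP hS2 x hx); rewrite zsE => /negbTE->.
have : x \in zeroset X1 by apply: (subsetP hS1); rewrite in_setU1 hx orbT.
by rewrite zsE => /negbTE->.
Qed.

Lemma indepP C I : reflect (forall e, e \in I -> e \notin cl C (I :\ e)) (indep C I).
Proof.
rewrite /indep; apply: (iffP forallP) => H e.
- by move=> he; move: (H e); rewrite he.
- by apply/implyP; exact: H.
Qed.

Lemma indep_sub C I J : indep C I -> J \subset I -> indep C J.
Proof.
move=> /indepP hI hJ; apply/indepP => e he; apply/negP => hc.
move: (hI e (subsetP hJ e he)); rewrite (subsetP (cl_mono C (setSD _ hJ)) e hc) //.
Qed.

Lemma rank_ge C A I : I \subset A -> indep C I -> #|I| <= rank C A.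
Proof. by move=> h1 h2; rewrite /rank (leq_bigmax_cond I) // h1 h2. Qed.

Lemma rank_mono C A B : A \subset B -> rank C A <= rank C B.
Proof.
move=> hAB; apply/bigmax_leqP => I /andP[hI hi]; apply: rank_ge hi.
exact: subset_trans hI hAB.
Qed.

Lemma rank_add_cl C A p : is_OM C -> p \in cl C A -> rank C (p |: A) = rank C A.
Proof.
move=> hOM hp; apply/eqP; rewrite eqn_leq [X in _ && X]rank_mono ?subsetUr // andbT.
apply/bigmax_leqP => I /andP[hIA hI].
case hpI: (p \in I); last first.
  apply: rank_ge hI; apply/subsetP => x hx.
  move: (subsetP hIA x hx); rewrite in_setU1 => /orP[/eqP hxp|] //.
  by move: hx; rewrite hxp hpI.
set I0 := I :\ p.
have hI0 : indep C I0 by apply: indep_sub hI (subD1set _ _).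
have hpI0 : p \notin cl C I0 by move/indepP: hI => /(_ p hpI).
have hI0A : I0 \subset A.
  apply/subsetP => x; rewrite in_setD1 => /andP[hxp hx].
  by move: (subsetP hIA x hx); rewrite in_setU1 (negbTE hxp).
have : ~~ (A \subset cl C I0).
  by apply/negP => hA; move: hpI0; rewrite (subsetP (cl_sub hA) p hp).
case/subsetPn => a haA haI0.
have haI0' : a \notin I0 by apply/negP => h; move: haI0; rewrite (subsetP (cl_ext C I0) a h).
have -> : #|I| = #|a |: I0| by rewrite (cardsD1 p I) hpI cardsU1 haI0'.
apply: rank_ge.
  by apply/subsetP => x; rewrite in_setU1 => /orP[/eqP->|/(subsetP hI0A)].
apply/indepP => x; rewrite in_setU1 => /orP[/eqP->|hx].
  by rewrite setU1K.
have hxa : x != a by apply/eqP => hxa; move: haI0'; rewrite -hxa hx.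
have -> : (a |: I0) :\ x = a |: (I0 :\ x).
  apply/setP => y; rewrite !inE; case: (eqVneq y a) => [->|]; last by [].
  by rewrite eq_sym hxa.
apply/negP => hc.
move/indepP: hI0 => /(_ x hx) hx0.
have := exchange hOM hc hx0; rewrite setD1K //; exact/negP.
Qed.

End Gen.

Section Ext2.
Variable E : finType.
Implicit Types (X Y Z : sv (option E)) (A I : {set E}).

Lemma res_supp X e : (e \in supp (res X)) = (Some e \in supp X).
Proof. by rewrite !inE ffunE. Qed.

Lemma in_imS A x : (x \in Some @: A) = (if x is Some e then e \in A else false).
Proof.
case: x => [e|]; first by rewrite mem_imset //; exact: Some_inj.
by apply/imsetP => -[y _].
Qed.

Lemma supp0 (V : sv E) : V != sv0 E -> supp V != set0.
Proof.
move=> hV; apply/eqP => h0; move/eqP: hV; apply; apply/ffunP => x.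
have : x \notin supp V by rewrite h0 inE.
by rewrite !ffunE inE negbK => /eqP.
Qed.

Lemma min_restr C' X0 e : is_OM C' -> X0 \in C' -> e \in supp (res X0) ->
  exists2 Z, Z \in deletion C' & (supp Z \subset supp (res X0)) && (e \in supp Z).
Proof.
move=> hOM.
suff H : forall n X0 e, #|supp (res X0)| <= n -> X0 \in C' -> e \in supp (res X0) ->
  exists2 Z, Z \in deletion C' & (supp Z \subset supp (res X0)) && (e \in supp Z).
  by move=> h0 he; apply: (H _ X0 e (leqnn _)).
elim=> [|n IH] {}X0 {}e hn h0 he.
  by move: hn; rewrite leqn0 cards_eq0 => /eqP heq; move: he; rewrite heq inE.
case hd: (res X0 \in deletion C'); first by exists (res X0); rewrite // subxx he.
have hnz : res X0 != sv0 E.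
  by apply/eqP => h; move: he; rewrite h !inE ffunE.
have hex : [exists X in C', res X == res X0] by apply/existsP; exists X0; rewrite h0 eqxx.
move: hd; rewrite inE hnz hex /= => /negbT /forallPn [X2].
rewrite !negb_imply => /and4P[h2 hnz2 hsub hnsub].
have hlt : #|supp (res X2)| <= n.
  have : supp (res X2) \proper supp (res X0) by rewrite properE hsub hnsub.
  by move/proper_card => hlt; rewrite -ltnS (leq_trans hlt hn).
case he2: (e \in supp (res X2)).
  have [Z hZ /andP[hZs hZe]] := IH X2 e hlt h2 he2.
  by exists Z => //; rewrite hZe (subset_trans hZs hsub).
case/set0Pn: (supp0 hnz2) => f hf2.
have hf0 := subsetP hsub f hf2.
move: (hf2) (hf0) (he) (he2); rewrite !res_supp => hf2' hf0' he' he2'.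
have [X3 h3 [hf3 he3 hs3]] := strong_elim hOM h0 h2 hf0' hf2' he' (negbT he2').
have hs3' : supp (res X3) \subset supp (res X0).
  apply/subsetP => x; rewrite !res_supp => /(subsetP hs3); rewrite in_setU.
  by case/orP => // hx; rewrite -res_supp; apply: (subsetP hsub); rewrite res_supp.
have hlt3 : #|supp (res X3)| <= n.
  have : supp (res X3) \proper supp (res X0).
    apply/properP; split => //; exists f => //; by rewrite res_supp.
  by move/proper_card => hlt3; rewrite -ltnS (leq_trans hlt3 hn).
have he3r : e \in supp (res X3) by rewrite res_supp.
have [Z hZ /andP[hZs hZe]] := IH X3 e hlt3 h3 he3r.
by exists Z => //; rewrite hZe (subset_trans hZs hs3').
Qed.

Lemma cl_del C' A e : is_OM C' ->
  (Some e \in cl C' (Some @: A)) = (e \in cl (deletion C') A).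
Proof.
move=> hOM; apply/idP/idP.
- move/clP => H; apply/clP => Z; rewrite inE => /and3P[_ /existsP[X0 /andP[h0 /eqP hZ]] _] hA.
  rewrite -hZ zsE res_supp -zsE; apply: H => //.
  apply/subsetP => x; rewrite in_imS; case: x => // a ha.
  by move: (subsetP hA a ha); rewrite -hZ !zsE res_supp.
- move/clP => H; apply/clP => X0 h0 hA.
  rewrite zsE; apply/negP => he.
  have he' : e \in supp (res X0) by rewrite res_supp.
  have [Z hZ /andP[hZs hZe]] := min_restr hOM h0 he'.
  have : e \in zeroset Z; last by rewrite zsE hZe.
  apply: H => //; apply/subsetP => a ha; rewrite zsE; apply/negP => /(subsetP hZs).
  rewrite res_supp -[_ \in supp _]negbK -zsE (subsetP hA) //.
  by rewrite in_imS.
Qed.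

Lemma imD1 A e : (Some @: A) :\ Some e = Some @: (A :\ e).
Proof. by apply/setP => x; rewrite !inE !in_imS; case: x => // a; rewrite !inE. Qed.

Lemma indep_del C' I : is_OM C' -> indep (deletion C') I = indep C' (Some @: I).
Proof.
move=> hOM; apply/indepP/indepP => H x.
- rewrite in_imS; case: x => // e he; rewrite imD1 cl_del //; exact: H.
- by move=> hx; rewrite -cl_del // -imD1; apply: H; rewrite in_imS.
Qed.

Lemma rank_del C' A : is_OM C' -> rank (deletion C') A = rank C' (Some @: A).
Proof.
move=> hOM; apply/eqP; rewrite eqn_leq; apply/andP; split.
- apply/bigmax_leqP => I /andP[hIA hI]; rewrite -(card_imset _ (@Some_inj _)).
  by apply: rank_ge; [exact: imsetS | rewrite -indep_del].
- apply/bigmax_leqP => J /andP[hJA hJ].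
  pose I := [set e | Some e \in J].
  have hJI : J = Some @: I.
    apply/setP => x; rewrite in_imS; case: x => [e|]; first by rewrite inE.
    by apply/negP => /(subsetP hJA); rewrite in_imS.
  rewrite hJI (card_imset _ (@Some_inj _)); apply: rank_ge.
    by apply/subsetP => e; rewrite inE => /(subsetP hJA); rewrite in_imS.
  by rewrite indep_del // -hJI.
Qed.

End Ext2.

Lemma res_comp (E : finType) (X Y : sv (option E)) : res (svcomp X Y) = svcomp (res X) (res Y).
Proof. by apply/ffunP => e; rewrite !ffunE. Qed.

Lemma zs_comp (T : finType) (U V : sv T) : zeroset (svcomp U V) = zeroset U :&: zeroset V.
Proof. by apply/setP => e; rewrite !inE ffunE; case: (U e). Qed.

Lemma comp0 (T : finType) (U : sv T) : svcomp U (sv0 T) = U.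
Proof. by apply/ffunP => e; rewrite !ffunE; case: (U e). Qed.

Lemma zs_liftS (E : finType) (V : sv (option E)) : V None != None ->
  zeroset V = Some @: zeroset (res V).
Proof.
move=> h; apply/setP => x; rewrite in_imS; case: x => [e|]; first by rewrite !inE ffunE.
by rewrite inE (negbTE h).
Qed.

Lemma zs_liftN (E : finType) (V : sv (option E)) : V None = None ->
  zeroset V = None |: Some @: zeroset (res V).
Proof.
move=> h; apply/setP => x; rewrite in_setU1 in_imS; case: x => [e|]; first by rewrite !inE ffunE.
by rewrite inE h.
Qed.

Lemma flat_I (T : finType) (C : {set sv T}) U V : U \in C -> V \in C ->
  flat C (zeroset U :&: zeroset V).
Proof.
move=> hU hV; apply/eqP; rewrite eqEsubset cl_ext andbT.
apply/subsetP => e /clP H; rewrite in_setI; apply/andP; split; apply: H => //.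
  exact: subsetIl.
exact: subsetIr.
Qed.

Theorem proposition3p3 (E : finType) (C : {set sv E})
    (C' : {set sv (option E)}) (g f : E) (X Y : sv (option E)) :
  program C g f ->
  single_ext C C' -> nontrivial_ext C' ->
  old_cocircuit C C' X -> old_cocircuit C C' Y ->
  conformal X Y -> comodular C' X Y ->
  X (Some g) = Some true -> Y (Some g) = Some true ->
  [/\ res X \in C, res Y \in C, conformal (res X) (res Y),
      res X g = Some true /\ res Y g = Some true &
      (((svcomp X Y) None <> None \/ principal_ext C C') ->
        comodular C (res X) (res Y))].
Proof.
move=> [hOM hgf hg hf] [hOM' hdel] hnt [hXC' hXC] [hYC' hYC] hconf [_ _ hXY hXnY hedge] hXg hYg.
have hgX : res X g = Some true by rewrite ffunE.
have hgY : res Y g = Some true by rewrite ffunE.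
have hsep : forall x, x \notin sep X Y by move=> x; rewrite hconf inE.
split => //.
  apply/setP => e; rewrite in_set0; have := hsep (Some e); rewrite !inE !ffunE => /negbTE.
  done.
move=> hcase.
have hneq : res X <> res Y.
  move=> hr.
  have hXY' : forall e, X (Some e) = Y (Some e).
    by move=> e; move/ffunP: hr => /(_ e); rewrite !ffunE.
  have hN : X None <> Y None.
    by move=> hN; apply: hXY; apply/ffunP => -[e|]; [exact: hXY' | exact: hN].
  have sub_case : forall U V, U \in C' -> V \in C' -> U None = None ->
      (forall e, U (Some e) = V (Some e)) -> U (Some g) = Some true ->
      V (Some g) = Some true -> U = V.
    move=> U V hU hV hUN hUV hUg hVg; have [_ _ H2 _] := hOM'.
    have hs : supp U \subset supp V.
      by apply/subsetP => -[e|]; rewrite !inE ?hUN // hUV.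
    case: (H2 _ _ hU hV hs) => // hopp.
    by move: hUg; rewrite hopp ffunE hVg.
  case hxn: (X None) => [b|]; last by apply: hXY; apply: sub_case.
  case hyn: (Y None) => [c|]; last first.
    by apply: hXY; symmetry; apply: sub_case => // e; rewrite hXY'.
  have := hsep None; rewrite inE hxn hyn /=.
  by move: hN; rewrite hxn hyn; clear hxn hyn; case: b; case: c.
have hnopp : res X <> svopp (res Y).
  by move/ffunP => /(_ g); rewrite [svopp _ _]ffunE hgX hgY.
split => //.
case: hedge => _ _ hrk'.
set W := svcomp X Y.
have hF : flat C (zeroset (res W)) by rewrite res_comp zs_comp; apply: flat_I.
rewrite -res_comp -/W.
split => //.
  exists [:: res X; res Y]; first by rewrite /= hXC hYC.
  by rewrite /= comp0 res_comp.
have hrC : forall A, rank C A = rank C' (Some @: A) by move=> A; rewrite -hdel rank_del.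
have hpE : None \in cl C' (Some @: [set: E]).
  apply/clP => X1 h1 hs; rewrite inE; apply/eqP; case hn: (X1 None) => [b|] //; exfalso; apply: hnt; exists X1 => //.
  apply/setP => -[e|]; last by rewrite !inE eqxx hn.
  have : Some e \in zeroset X1 by apply: (subsetP hs); rewrite in_imS.
  by rewrite !inE => ->.
have hOMr : OMrank C = OMrank C'.
  rewrite /OMrank hrC -(rank_add_cl hOM' hpE); congr rank.
  by apply/setP => x; rewrite in_setU1 in_imS !inE; case: x => [e|] //; rewrite in_setT orbT.
rewrite hrC hOMr -hrk'; congr (_ + _).
case hW: (W None) => [b|].
  by rewrite (zs_liftS (V:=W)) // hW.
rewrite (zs_liftN hW) rank_add_cl //.
case: hcase => [//|[A0 hA0 HA]].
have hXN : X None = None by move: hW; rewrite /W ffunE; case: (X None).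
have hYN : Y None = None by move: hW; rewrite /W ffunE hXN.
have key : forall Z, Z \in C' -> res Z \in C -> Z None = None ->
    None \in cl C' (Some @: zeroset (res Z)).
  move=> Z hZ hZC hZN; apply/clP => X1 h1 hs; rewrite inE; apply/eqP; case hn: (X1 None) => [b|] //; exfalso.
  case: (eqVneq (res X1) (sv0 E)) => h0.
    apply: hnt; exists X1 => //; apply/setP => -[e|]; last by rewrite !inE eqxx hn.
    move/ffunP: h0 => /(_ e); rewrite !ffunE => he.
    by rewrite !inE he.
  have hsub : supp (res X1) \subset supp (res Z).
    apply/subsetP => e he; rewrite -[_ \in _]negbK -zsE; apply/negP => hz.
    have : Some e \in zeroset X1 by apply: (subsetP hs); rewrite in_imS.
    by rewrite zsE -res_supp he.
  move: hZC; rewrite -hdel inE => /and3P[_ _ /forallP/(_ X1)].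
  rewrite h1 h0 hsub /= => hsub2.
  have hsupp : supp Z \subset supp X1.
    apply/subsetP => -[e|]; last by rewrite inE hZN.
    by rewrite -!res_supp => /(subsetP hsub2).
  have [_ _ H2 _] := hOM'.
  by case: (H2 _ _ hZ h1 hsupp) => hZX; move: hZN; rewrite hZX ?ffunE hn.
have hfX : flat C (zeroset (res X)) by rewrite -[zeroset _]setIid; apply: flat_I.
have hfY : flat C (zeroset (res Y)) by rewrite -[zeroset _]setIid; apply: flat_I.
have h1 := (HA _ hfX).1 (key X hXC' hXC hXN).
have h2 := (HA _ hfY).1 (key Y hYC' hYC hYN).
apply/(HA _ hF).2; rewrite res_comp zs_comp; exact/subsetIP.
Qed.
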